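(* For the system $$u_{0,0}-v_{1,1}=0,\qquad (u_{1,0}-u_{0,0})(v_{1,0}-u_{0,0})-(u_{0,1}-u_{0,0})(v_{0,1}-u_{0,0})=0,$$ the following pairs are conservation laws, i.e. satisfy $(\mathcal T-1)\rho=(\mathcal S-1)\sigma$ on solutions: $$(\rho_1,\sigma_1)=\Big(\ln\Big|\frac{v_{0,0}-u_{-1,0}}{(v_{1,0}-u_{-1,0})^2}\Big|,\ \ \ln\Big|\frac{(u_{-2,0}-v_{0,0})^2}{u_{-2,0}-u_{-1,0}}\Big|\Big),$$ $$(\varrho,\varsigma)=\big(\ln|v_{1,0}-u_{0,0}|,\ \ \ln|v_{0,1}-u_{0,0}|\big).$$
   Context: Unknowns $u,v$ on $\mathbb Z^2$, $u_{i,j}=u(n+i,m+j)$, similarly $v$. Shifts $\mathcal S:n\mapsto n+1$, $\mathcal T:m\mapsto m+1$, acting by $\mathcal S^k\mathcal T^\ell(f_{i,j})=f_{i+k,j+\ell}$. A conservation law is a pair $(\rho,\sigma)$ of functions of finitely many shifts of $(u,v)$ such that $(\mathcal T-1)\rho=(\mathcal S-1)\sigma$ holds for all solutions of the system (on which all arguments of logarithms and denominators are nonzero). *)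

(* Defs.v *)
From Stdlib Require Import Reals ZArith.
Open Scope R_scope.

(* A lattice field: f n m = f(n,m). Shifted value f_{i,j} at (n,m). *)
Definition field := Z -> Z -> R.
Definition sh (f : field) (i j : Z) : field := fun n m => f (n + i)%Z (m + j)%Z.

Definition is_solution (u v : field) : Prop :=
  forall n m : Z,
    u n m - sh v 1 1 n m = 0 /\
    (sh u 1 0 n m - u n m) * (sh v 1 0 n m - u n m)
    - (sh u 0 1 n m - u n m) * (sh v 0 1 n m - u n m) = 0.

Definition conservation_identity (rho sigma : field) : Prop :=
  forall n m : Z, rho n (m + 1)%Z - rho n m = sigma (n + 1)%Z m - sigma n m.

Definition rho1 (u v : field) : field := fun n m =>
  ln (Rabs ((v n m - sh u (-1) 0 n m) / (sh v 1 0 n m - sh u (-1) 0 n m) ^ 2)).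
Definition sigma1 (u v : field) : field := fun n m =>
  ln (Rabs ((sh u (-2) 0 n m - v n m) ^ 2 / (sh u (-2) 0 n m - sh u (-1) 0 n m))).

Definition nondeg1 (u v : field) : Prop :=
  forall n m : Z,
    v n m - sh u (-1) 0 n m <> 0 /\
    sh v 1 0 n m - sh u (-1) 0 n m <> 0 /\
    sh u (-2) 0 n m - v n m <> 0 /\
    sh u (-2) 0 n m - sh u (-1) 0 n m <> 0.

Definition rho2 (u v : field) : field := fun n m =>
  ln (Rabs (sh v 1 0 n m - u n m)).
Definition sigma2 (u v : field) : field := fun n m =>
  ln (Rabs (sh v 0 1 n m - u n m)).

Definition nondeg2 (u v : field) : Prop :=
  forall n m : Z,
    sh v 1 0 n m - u n m <> 0 /\ sh v 0 1 n m - u n m <> 0.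

(* Main.v *)
Require Import Defs.
From Stdlib Require Import Reals ZArith Lra Lia.
Open Scope R_scope.

Lemma lnkey (x y z t : R) : x <> 0 -> y <> 0 -> z <> 0 -> t <> 0 -> x * t = z * y ->
  ln (Rabs x) - ln (Rabs y) = ln (Rabs z) - ln (Rabs t).
Proof.
  intros Hx Hy Hz Ht E.
  assert (ln (Rabs x) + ln (Rabs t) = ln (Rabs z) + ln (Rabs y)).
  { rewrite <- !ln_mult by (apply Rabs_pos_lt; assumption).
    rewrite <- !Rabs_mult, E. reflexivity. }
  lra.
Qed.

Lemma part1 : forall u v : field, is_solution u v -> nondeg1 u v ->
     conservation_identity (rho1 u v) (sigma1 u v).
Proof.
intros u v Hs Hn n m.
unfold rho1, sigma1, sh.
destruct (Hs (n + -1)%Z m) as [E1 E2].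
destruct (Hs (n + -2)%Z m) as [E3 _].
destruct (Hs n m) as [E4 _].
destruct (Hn n m) as (N1&N2&N3&N4).
destruct (Hn n (m+1)%Z) as (N5&N6&_&_).
destruct (Hn (n+1)%Z m) as (_&_&N7&N8).
unfold sh in *.
rewrite ?Z.add_0_r in *.
repeat match goal with |- context [(?a + ?b)%Z] => progress ring_simplify (a+b)%Z end.
repeat match goal with H: context [(?a + ?b)%Z] |- _ => progress ring_simplify (a+b)%Z in H end.
assert (R1 : v n (m+1)%Z = u (n-1)%Z m) by lra.
assert (R2 : v (n-1)%Z (m+1)%Z = u (n-2)%Z m) by lra.
assert (R3 : v (n+1)%Z (m+1)%Z = u n m) by lra.
rewrite R1, R3 in *. rewrite R2 in E2. clear E1 E3 E4 R1 R2 R3.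
set (a := u (n-1)%Z m) in *. set (b := u n m) in *. set (c := u (n-1)%Z (m+1)%Z) in *.
set (p := u (n-2)%Z m) in *. set (w := v n m) in *. set (z := v (n+1)%Z m) in *.
clearbody a b c p w z.
apply lnkey.
- unfold Rdiv; apply Rmult_integral_contrapositive; split; auto; apply Rinv_neq_0_compat, pow_nonzero; auto.
- unfold Rdiv; apply Rmult_integral_contrapositive; split; auto; apply Rinv_neq_0_compat, pow_nonzero; auto.
- unfold Rdiv; apply Rmult_integral_contrapositive; split; [apply pow_nonzero|apply Rinv_neq_0_compat]; auto.
- unfold Rdiv; apply Rmult_integral_contrapositive; split; [apply pow_nonzero|apply Rinv_neq_0_compat]; auto.
- assert (Hpa : p - a <> 0) by auto.
  assert (Hc : c = a + (b - a)*(w-a)/(p-a)).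
  { apply (Rplus_eq_reg_r (-a)). apply (Rmult_eq_reg_r (p-a)); [|auto].
    replace ((a + (b - a) * (w - a) / (p - a) + - a) * (p - a)) with ((b-a)*(w-a)) by (field; auto). lra. }
  subst c. field. repeat split; auto.
  replace (b * (p - a) - (a * (p - a) + (b - a) * (w - a))) with ((b-a)*(p-w)) by ring.
  apply Rmult_integral_contrapositive; split; auto. intro; apply N8; lra.
Qed.

Lemma part2 : forall u v : field, is_solution u v -> nondeg2 u v ->
     conservation_identity (rho2 u v) (sigma2 u v).
Proof.
intros u v Hs Hn n m.
unfold rho2, sigma2, sh.
destruct (Hs n m) as [E1 E2].
destruct (Hn n m) as (N1&N2).
destruct (Hn n (m+1)%Z) as (N5&_).
destruct (Hn (n+1)%Z m) as (_&N7).
unfold sh in *.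
rewrite ?Z.add_0_r in *.
repeat match goal with |- context [(?a + ?b)%Z] => progress ring_simplify (a+b)%Z end.
repeat match goal with H: context [(?a + ?b)%Z] |- _ => progress ring_simplify (a+b)%Z in H end.
assert (R3 : v (n+1)%Z (m+1)%Z = u n m) by lra.
rewrite R3 in *.
apply lnkey; auto.
nra.
Qed.

Theorem mainTheorem12 :
  (forall u v : field, is_solution u v -> nondeg1 u v ->
     conservation_identity (rho1 u v) (sigma1 u v)) /\
  (forall u v : field, is_solution u v -> nondeg2 u v ->
     conservation_identity (rho2 u v) (sigma2 u v)).
Proof. split; [exact part1 | exact part2]. Qed.
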